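(* Let $a_{1}<a_{2}<a_{3}<\cdots$ be a strictly increasing infinite sequence of positive integers, let $A=\{a_{1},a_{2},a_{3},\ldots\}$, and let $n>0$ be an integer such that: (1) whenever $m>n$, there exist indices $i<r\leq s<j$ with $a_{m}=a_{i}+a_{j}=a_{r}+a_{s}$; and (2) whenever $a=a_{i}+a_{j}=a_{r}+a_{s}>a_{n}$ for some indices $i<r<s<j$, then $a=a_{m}$ for some $m>n$. Suppose $d_{1},d_{2},x,y$ are integers such that $x\neq d_{1}$, $d_{1}\neq d_{2}$, $d_{2}\neq y$, \[ \{d_{1},2d_{1},x,x+d_{1},x+2d_{1}\}\cup\{d_{2},2d_{2},y,y+d_{2},y+2d_{2}\}\subseteq A, \] $\{x,x+d_{1}\}\cap\{y,y+d_{2}\}\neq\varnothing$, and $d_{1}+d_{2}>a_{n}$. Then there is an integer $k\geq1$ such that every positive multiple of $k$ belongs to $A$. *)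

(* Defs.v *)
From Stdlib Require Import ZArith Lia.
Open Scope Z_scope.

(* The set A = {a_1, a_2, ...}: indices start at 1; a 0 is unused. *)
Definition inA (a : nat -> Z) (v : Z) : Prop :=
  exists i : nat, (1 <= i)%nat /\ a i = v.

(* Main.v *)
Require Import Defs.
From Stdlib Require Import ZArith Lia.
Open Scope Z_scope.

Section Aux.
Variable a : nat -> Z.
Variable n : nat.
Hypothesis Hinc : forall i j : nat, (1 <= i)%nat -> (i < j)%nat -> a i < a j.
Hypothesis Hn : (0 < n)%nat.
Hypothesis H2 : forall (v : Z) (i r s j : nat),
        (1 <= i)%nat -> (i < r)%nat -> (r < s)%nat -> (s < j)%nat ->
        v = a i + a j -> v = a r + a s -> v > a n ->
        exists m : nat, (n < m)%nat /\ v = a m.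

Lemma mono i j : (1 <= i)%nat -> (1 <= j)%nat -> a i < a j -> (i < j)%nat.
Proof.
  intros Hi Hj H. destruct (Nat.lt_ge_cases i j) as [h|h]; auto.
  destruct (Nat.eq_dec i j) as [->|ne]; [lia|].
  assert (a j < a i) by (apply Hinc; lia). lia.
Qed.

Lemma clos3 p q r s : inA a p -> inA a q -> inA a r -> inA a s ->
  p < q -> q < r -> r < s -> p + s = q + r -> p + s > a n -> inA a (p + s).
Proof.
  intros [i1 [h1 e1]] [i2 [h2 e2]] [i3 [h3 e3]] [i4 [h4 e4]] l1 l2 l3 E G.
  subst.
  destruct (H2 (a i1 + a i4) i1 i2 i3 i4) as [m [hm em]]; auto;
    try (apply mono; auto).
  exists m; split; [lia|auto].
Qed.

Lemma clos p q r s : inA a p -> inA a q -> inA a r -> inA a s ->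
  p < q -> p < r -> q < s -> r < s -> q <> r -> p + s = q + r -> p + s > a n ->
  inA a (p + s).
Proof.
  intros. destruct (Z.lt_total q r) as [h|[h|h]]; try lia.
  - apply (clos3 p q r s); auto.
  - apply (clos3 p r q s); auto; lia.
Qed.

Lemma ap u d : 0 < u -> 0 < d -> u <> d -> inA a d -> inA a (2*d) ->
  inA a u -> inA a (u + d) -> inA a (u + 2*d) -> u + 3*d > a n ->
  forall t, 0 <= t -> inA a (u + t*d).
Proof.
  intros hu hd hud Ad A2d Au Aud Au2d G.
  assert (forall t, 0 <= t -> inA a (u + t*d) /\ inA a (u + (t+1)*d) /\ inA a (u + (t+2)*d)).
  { apply natlike_ind.
    - replace (u + 0*d) with u by ring. replace (u + (0+1)*d) with (u+d) by ring.
      replace (u + (0+2)*d) with (u+2*d) by ring. auto.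
    - intros t ht [_ [B C]]. split; [|split].
      + replace (u + Z.succ t * d) with (u + (t+1)*d) by ring. auto.
      + replace (u + (Z.succ t + 1)*d) with (u + (t+2)*d) by ring. auto.
      + replace (u + (Z.succ t + 2)*d) with (d + (u + (t+2)*d)) by ring.
        apply (clos d (2*d) (u + (t+1)*d)); auto; try nia.
        intro E. assert (t = 0 \/ 1 <= t) as [->|ht1] by lia; nia. }
  intros t ht. apply H; auto.
Qed.

Lemma layers u d : 0 < u -> 0 < d -> u + 3*d > a n ->
  (forall t, 0 <= t -> inA a (u + t*d)) ->
  forall j, 1 <= j -> forall M, 2*j <= M -> inA a (j*u + M*d).
Proof.
  intros hu hd G AP.
  assert (forall i, 0 <= i -> forall M, 2*(i+1) <= M -> inA a ((i+1)*u + M*d)).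
  { apply (natlike_ind (fun i => forall M, 2*(i+1) <= M -> inA a ((i+1)*u + M*d))).
    - intros M hM. replace ((0+1)*u + M*d) with (u + M*d) by ring. apply AP. lia.
    - intros i hi IH M hM.
      replace ((Z.succ i + 1) * u + M * d) with (u + ((i+1)*u + M*d)) by ring.
      pose proof (IH (M-1) ltac:(lia)) as R.
      pose proof (IH M ltac:(lia)) as S.
      replace (u + ((i + 1) * u + M * d)) with ((u + 0*d) + ((i+1)*u + M*d)) by ring.
      apply (clos (u + 0*d) (u + 1*d) ((i+1)*u + (M-1)*d)); auto; try apply AP; try lia; nia. }
  intros j hj M hM. replace j with ((j-1)+1) by ring. apply H; lia.
Qed.

End Aux.

Theorem lemma2 (a : nat -> Z) (n : nat) (d1 d2 x y : Z)
  (Hpos : forall i : nat, (1 <= i)%nat -> 0 < a i)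
  (Hinc : forall i j : nat, (1 <= i)%nat -> (i < j)%nat -> a i < a j)
  (Hn : (0 < n)%nat)
  (H1 : forall m : nat, (n < m)%nat ->
        exists i r s j : nat,
          (1 <= i)%nat /\ (i < r)%nat /\ (r <= s)%nat /\ (s < j)%nat /\
          a m = a i + a j /\ a m = a r + a s)
  (H2 : forall (v : Z) (i r s j : nat),
        (1 <= i)%nat -> (i < r)%nat -> (r < s)%nat -> (s < j)%nat ->
        v = a i + a j -> v = a r + a s -> v > a n ->
        exists m : nat, (n < m)%nat /\ v = a m)
  (Hxd1 : x <> d1) (Hd12 : d1 <> d2) (Hd2y : d2 <> y)
  (HA1 : inA a d1 /\ inA a (2 * d1) /\ inA a x /\ inA a (x + d1) /\ inA a (x + 2 * d1))
  (HA2 : inA a d2 /\ inA a (2 * d2) /\ inA a y /\ inA a (y + d2) /\ inA a (y + 2 * d2))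
  (Hmeet : exists z : Z, (z = x \/ z = x + d1) /\ (z = y \/ z = y + d2))
  (Hsum : d1 + d2 > a n) :
  exists k : Z, 1 <= k /\ forall m : Z, 1 <= m -> inA a (k * m).
Proof.
  assert (P : forall v, inA a v -> 0 < v).
  { intros v [i [hi <-]]. auto. }
  assert (main : forall u d, 0 < u -> 0 < d -> u <> d -> inA a d -> inA a (2*d) ->
    inA a u -> inA a (u + d) -> inA a (u + 2*d) -> u + 3*d > a n ->
    exists k : Z, 1 <= k /\ forall m : Z, 1 <= m -> inA a (k * m)).
  { intros u d hu hd hud A1 A2 A3 A4 A5 G.
    pose proof (ap a n Hinc Hn H2 u d hu hd hud A1 A2 A3 A4 A5 G) as AP.
    exists (u + 2*d). split; [lia|].
    intros m hm. replace ((u + 2*d) * m) with (m*u + (2*m)*d) by ring.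
    apply (layers a n Hinc Hn H2 u d); auto; lia. }
  destruct HA1 as [a1 [a2 [a3 [a4 a5]]]]. destruct HA2 as [b1 [b2 [b3 [b4 b5]]]].
  pose proof (P _ a1). pose proof (P _ a3). pose proof (P _ b1). pose proof (P _ b3).
  destruct (Z.le_ge_cases d2 d1).
  - apply (main x d1); auto; lia.
  - apply (main y d2); auto; lia.
Qed.
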